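(* Let $f_0\in\mathbb{R}$, $g\in\mathbb{R}^n$, $H$ a symmetric $n\times n$ matrix, $\sigma>0$, and $m(s)=f_0+\langle g,s\rangle+\frac12\langle Hs,s\rangle+\frac16\sigma\|s\|^3$. Let $s_k\in\mathbb{R}^n$ with $m(s_k)\le m(0)$, set $g_k=g+Hs_k$, and assume $\|g_k\|_{r,1}\ge\frac12\sigma\|s_k\|^2$. Let $d_k$ be a minimizer of $\langle g_k,v\rangle$ over $\{v:\|v\|=1\}$, let $\alpha_k^C$ be a minimizer of $\alpha\mapsto m(s_k+\alpha d_k)$ over $\alpha\ge0$, and $s_k^C=s_k+\alpha_k^Cd_k$. Then $$m(s_k)-m(s_k^C)\ge\frac12\min\left[\frac{\big|\|g_k\|_{r,1}-\frac12\sigma\|s_k\|^2\big|^2}{1+\frac32(\|H\|_{r,2}+\sigma\|s_k\|)},\ \frac{\big|\|g_k\|_{r,1}-\frac12\sigma\|s_k\|^2\big|^{3/2}}{3\sqrt\sigma}\right].$$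
   Context: $\|\cdot\|$ is an arbitrary (possibly non-smooth) norm on $\mathbb{R}^n$, $\langle\cdot,\cdot\rangle$ the Euclidean inner product, $\|v\|_{r,1}=\max_{\|s\|=1}|\langle v,s\rangle|$ the dual norm, and for a symmetric matrix $H$, $\|H\|_{r,2}=\max_{\|v\|=1}|\langle Hv,v\rangle|$. *)

(* Defs.v *)
From HB Require Import structures.
From mathcomp Require Import all_boot all_order all_algebra.
From mathcomp Require Import all_classical all_reals all_analysis.
Set Implicit Arguments. Unset Strict Implicit. Unset Printing Implicit Defensive.
Import Order.TTheory GRing.Theory Num.Theory.
Local Open Scope ring_scope.
Local Open Scope classical_set_scope.

Definition dotp (R : realType) (n : nat) (u v : 'cV[R]_n) : R :=
  \sum_(i < n) u i 0 * v i 0.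

Definition is_norm (R : realType) (n : nat) (N : 'cV[R]_n -> R) : Prop :=
  [/\ forall x, 0 <= N x,
      forall x, N x = 0 -> x = 0,
      forall (a : R) x, N (a *: x) = `|a| * N x
    & forall x y, N (x + y) <= N x + N y].

(* Dual norm: ||v||_{r,1} = max_{||s||=1} |<v,s>| (written as a sup) *)
Definition dualnorm (R : realType) (n : nat) (N : 'cV[R]_n -> R) (v : 'cV[R]_n) : R :=
  sup [set `|dotp v s| | s in [set s | N s = 1]].

(* ||H||_{r,2} = max_{||v||=1} |<Hv,v>| (written as a sup) *)
Definition matnorm (R : realType) (n : nat) (N : 'cV[R]_n -> R) (H : 'M[R]_n) : R :=
  sup [set `|dotp (H *m v) v| | v in [set v | N v = 1]].

Definition cubic_model (R : realType) (n : nat) (N : 'cV[R]_n -> R)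
  (f0 : R) (g : 'cV[R]_n) (H : 'M[R]_n) (sigma : R) (s : 'cV[R]_n) : R :=
  f0 + dotp g s + 2^-1 * dotp (H *m s) s + sigma / 6%:R * N s ^+ 3.

(* Main.v *)
Set Warnings "-all".
Require Import Defs.
From HB Require Import structures.
From mathcomp Require Import all_boot all_order all_algebra.
From mathcomp Require Import all_classical all_reals all_analysis.
Import Order.TTheory GRing.Theory Num.Theory.
From mathcomp Require Import ring lra.
Import numFieldNormedType.Exports.
Local Open Scope ring_scope.
Local Open Scope classical_set_scope.
Section Aux.
Variables (R : realType) (n : nat) (N : 'cV[R]_n -> R).
Hypothesis hN : is_norm N.

Lemma N_ge0 x : 0 <= N x. Proof. by case: hN. Qed.
Lemma NZ a x : N (a *: x) = `|a| * N x. Proof. by case: hN. Qed.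
Lemma ND x y : N (x + y) <= N x + N y. Proof. by case: hN. Qed.
Lemma N_eq0 x : N x = 0 -> x = 0. Proof. by case: hN => _ h _ _; apply: h. Qed.
Lemma N0 : N 0 = 0. Proof. by rewrite -(scale0r 0) NZ normr0 mul0r. Qed.
Lemma NN x : N (- x) = N x. Proof. by rewrite -scaleN1r NZ normrN normr1 mul1r. Qed.
Lemma NB x y : N x - N y <= N (x - y).
Proof. by rewrite lerBlDr; apply: le_trans (ND _ _); rewrite subrK. Qed.

Lemma N_sum (I : finType) (F : I -> 'cV[R]_n) : N (\sum_i F i) <= \sum_i N (F i).
Proof.
elim/big_ind2: _ => [|x1 x2 y1 y2 h1 h2|//]; first by rewrite N0.
by apply: le_trans (ND _ _) _; apply: lerD.
Qed.

Lemma entry_le (r : 'rV[R]_n) i : `|r 0 i| <= `|r|.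
Proof.
have /mapP[j Hj ->] : `|r 0 i| \in [seq `|r x.1 x.2| | x : 'I_1 * 'I_n].
  by apply/mapP; exists (0, i) => //=; rewrite mem_enum.
by change (`|r j.1 j.2| <= mx_norm r); rewrite mx_normrE; apply/bigmax_geP; right => /=; exists j.
Qed.

Definition KN := \sum_i N (delta_mx i 0 : 'cV[R]_n).

Lemma N_le_KN (r : 'rV[R]_n) : N r^T <= KN * `|r|.
Proof.
have -> : r^T = \sum_i r 0 i *: (delta_mx i 0 : 'cV[R]_n).
  apply/matrixP => i j; rewrite !mxE summxE (bigD1 i) //= big1 => [|k ki].
    by rewrite !mxE ord1 !eqxx mulr1 addr0.
  by rewrite !mxE eq_sym (negbTE ki) mulr0.
apply: le_trans; first exact: N_sum.
rewrite /KN mulr_suml; apply: ler_sum => i _.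
by rewrite NZ mulrC ler_wpM2l ?N_ge0 ?entry_le.
Qed.

Lemma fN_cont : continuous (fun r : 'rV[R]_n => N r^T).
Proof.
move=> r; have FF : Filter (nbhs r) := nbhs_filter r.
apply/(@cvgrPdist_le _ _ _ (nbhs r) FF) => e e0.
have K0 : 0 <= KN by apply: sumr_ge0 => i _; apply: N_ge0.
have K1 : 0 < KN + 1 by apply: ltr_wpDl.
have H := @cvgr_dist_le _ _ _ (nbhs r) FF id r cvg_id _ (divr_gt0 e0 K1).
near=> y.
have hy : `|r - y| <= e / (KN + 1) by near: y; exact: H.
have h1 : `|N r^T - N y^T| <= N (r - y)^T.
  have E : (r - y)^T = r^T - y^T by rewrite linearB.
  rewrite E ler_norml; apply/andP; split; last exact: NB.
  have h := NB y^T r^T; rewrite -[N (y^T - r^T)]NN opprB in h; lra.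
apply: le_trans h1 _; apply: le_trans (N_le_KN _) _.
apply: le_trans (ler_wpM2l K0 hy) _.
rewrite mulrA ler_pdivrMr //; nra.
Unshelve. all: by end_near.
Qed.


Lemma N_lower (x0 : 'cV[R]_n) : x0 != 0 ->
  exists2 c, 0 < c & forall x, c * `|x^T| <= N x.
Proof.
move=> x00.
pose S := [set r : 'rV[R]_n | `|r| = 1]%classic.
have nT : forall x : 'cV[R]_n, x != 0 -> `|x^T| != 0.
  move=> x; apply: contra; rewrite normr_eq0 => /eqP h.
  by apply/eqP; apply: trmx_inj; rewrite h trmx0.
have unitS : forall x : 'cV[R]_n, x != 0 -> S (`|x^T|^-1 *: x^T).
  move=> x /nT xn; rewrite /S /= normrZ ger0_norm ?invr_ge0 //.
  by rewrite mulVf.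
have S0 : (S !=set0)%classic by exists (`|x0^T|^-1 *: x0^T); apply: unitS.
have cS : compact S.
  apply: bounded_closed_compact.
    exists 1; split => // M M1 r /= ->; exact: ltW.
  have -> : S = (Num.norm @^-1` [set x : R | x = 1])%classic by [].
  apply: preimage_closed; last exact: closed_eq.
  by move=> x _; apply: norm_continuous.
have cf : {within S, continuous (fun r : 'rV[R]_n => N r^T)}.
  by apply: continuous_subspaceT; exact: fN_cont.
have [c0 c0S minc] := compact_EVT_min S0 cS cf.
have c0S' : S c0 by rewrite inE in c0S.
exists (N c0^T).
  rewrite lt_def N_ge0 andbT; apply/eqP => /N_eq0.
  move=> h; have c00 : c0 = 0 by apply: trmx_inj; rewrite h trmx0.
  move: c0S'; rewrite /S /= c00 normr0.
  by move/eqP; rewrite eq_sym oner_eq0.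
move=> x; have [x0'|xn0] := eqVneq x 0.
  by rewrite x0' trmx0 normr0 mulr0 N_ge0.
have := minc _ (mem_set (unitS _ xn0)).
rewrite linearZ /= trmxK NZ ger0_norm ?invr_ge0 //.
have xp : 0 < `|x^T| by rewrite lt_def nT // normr_ge0.
by rewrite ler_pdivlMl // mulrC.
Qed.
End Aux.

Section Dot.
Variables (R : realType) (n : nat).
Implicit Types (u v w : 'cV[R]_n).

Lemma dotpC u v : dotp u v = dotp v u.
Proof. by apply: eq_bigr => i _; rewrite mulrC. Qed.
Lemma dotpDr u v w : dotp u (v + w) = dotp u v + dotp u w.
Proof. by rewrite /dotp -big_split; apply: eq_bigr => i _; rewrite mxE mulrDr. Qed.
Lemma dotpDl u v w : dotp (v + w) u = dotp v u + dotp w u.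
Proof. by rewrite dotpC dotpDr !(dotpC u). Qed.
Lemma dotpZr u a v : dotp u (a *: v) = a * dotp u v.
Proof. by rewrite /dotp mulr_sumr; apply: eq_bigr => i _; rewrite mxE mulrCA. Qed.
Lemma dotpZl u a v : dotp (a *: v) u = a * dotp v u.
Proof. by rewrite dotpC dotpZr dotpC. Qed.
Lemma dotpNr u v : dotp u (- v) = - dotp u v.
Proof. by rewrite -scaleN1r dotpZr mulN1r. Qed.

Lemma dotp_sym (H : 'M[R]_n) u v : H^T = H -> dotp (H *m u) v = dotp (H *m v) u.
Proof.
move=> hH; rewrite /dotp.
under eq_bigr => i _ do rewrite mxE mulr_suml.
under [RHS]eq_bigr => i _ do rewrite mxE mulr_suml.
rewrite exchange_big /=; apply: eq_bigr => i _; apply: eq_bigr => j _.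
have -> : H j i = H i j by rewrite -{1}hH mxE.
by rewrite mulrAC.
Qed.

Lemma dotp_bound (H : 'M[R]_n) v b : (forall i, `|v i 0| <= b) ->
  `|dotp (H *m v) v| <= \sum_i \sum_j `|H i j| * b ^+ 2.
Proof.
move=> hb; rewrite /dotp; apply: le_trans (ler_norm_sum _ _ _) _.
apply: ler_sum => i _; rewrite mxE mulr_suml.
apply: le_trans (ler_norm_sum _ _ _) _; apply: ler_sum => j _.
rewrite !normrM -mulrA ler_wpM2l // expr2.
have b0 : 0 <= b by apply: le_trans (hb i).
by apply: ler_pM => //; apply: hb.
Qed.
End Dot.

Theorem lemma5p2 (R : realType) (n : nat) (N : 'cV[R]_n -> R)
  (f0 : R) (g : 'cV[R]_n) (H : 'M[R]_n) (sigma : R)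
  (sk dk : 'cV[R]_n) (alphak : R) :
  is_norm N ->
  H^T = H ->
  0 < sigma ->
  cubic_model N f0 g H sigma sk <= cubic_model N f0 g H sigma 0 ->
  sigma / 2 * N sk ^+ 2 <= dualnorm N (g + H *m sk) ->
  N dk = 1 ->
  (forall v, N v = 1 -> dotp (g + H *m sk) dk <= dotp (g + H *m sk) v) ->
  0 <= alphak ->
  (forall a, 0 <= a ->
     cubic_model N f0 g H sigma (sk + alphak *: dk)
       <= cubic_model N f0 g H sigma (sk + a *: dk)) ->
  let gap := `|dualnorm N (g + H *m sk) - sigma / 2 * N sk ^+ 2| in
  cubic_model N f0 g H sigma sk
    - cubic_model N f0 g H sigma (sk + alphak *: dk)
  >= 2^-1 * Num.min
       (gap ^+ 2 / (1 + 3%:R / 2 * (matnorm N H + sigma * N sk)))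
       (gap `^ (3%:R / 2) / (3%:R * Num.sqrt sigma)).
Proof.
move=> hN hH hs _ hgap hdk hmin ha hamin; cbv zeta.
set gk := g + H *m sk.
set d := dotp gk dk.
have dle0 : d <= 0.
  have := hmin (- dk); rewrite (@NN _ _ _ hN) dotpNr => /(_ hdk); rewrite -/d; lra.
have hD : dualnorm N gk = - d.
  rewrite /dualnorm.
  set E := [set _ | _ in _].
  have ub : forall y, E y -> y <= - d.
    move=> y [s /= hs1 <-]; rewrite ler_norml.
    have h1 := hmin s hs1; have h2 := hmin (- s).
    rewrite (@NN _ _ _ hN) dotpNr in h2; have {}h2 := h2 hs1.
    rewrite -/gk -/d in h1 h2; apply/andP; split; lra.
  have Ed : E (- d) by exists dk => //; rewrite ler0_norm.
  have hs_E : has_sup E by split; [exists (-d) | exists (-d) => y /ub].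
  apply/le_anti/andP; split; last exact: sup_upper_bound.
  rewrite -[X in _ <= X]sup1; apply: sup_le.
  - by move=> y /ub hy; exists (-d).
  - by exists (-d).
  - split; first by exists (-d).
    by exists (-d) => y /= ->.
have dk0 : dk != 0.
  by apply/eqP => h; move: hdk; rewrite h (@N0 _ _ _ hN) => /eqP; rewrite eq_sym oner_eq0.
have [c c0 hc] := @N_lower _ _ _ hN _ dk0.
set M := matnorm N H.
set q := dotp (H *m dk) dk.
have hqM : `|q| <= M.
  rewrite /M /matnorm; set F := [set _ | _ in _].
  have Fq : F `|q| by exists dk.
  apply: sup_upper_bound => //; split; first by exists `|q|.
  exists (\sum_i \sum_j `|H i j| * (c^-1) ^+ 2) => y [v /= hv <-].
  apply: dotp_bound => i.
  have := hc v; rewrite hv => hv1.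
  have : `|v i 0| <= `|v^T| by have := entry_le _ _ v^T i; rewrite mxE.
  move=> hvi; rewrite -[c^-1]mulr1 ler_pdivlMl //; apply: le_trans hv1.
  by apply: ler_wpM2l => //; apply: ltW.
have M0 : 0 <= M by apply: le_trans hqM.
have qM : q <= M by apply: le_trans (ler_norm _) hqM.
set a := N sk.
have a0 : 0 <= a by apply: (@N_ge0 _ _ _ hN).
have expand : forall al, 0 <= al ->
    cubic_model N f0 g H sigma sk - cubic_model N f0 g H sigma (sk + al *: dk)
    = - al * d - al ^+ 2 / 2 * q - sigma / 6%:R * (N (sk + al *: dk) ^+ 3 - a ^+ 3).
  move=> al al0; rewrite /cubic_model mulmxDr -scalemxAr.
  rewrite !dotpDr !dotpDl !dotpZr !dotpZl (dotp_sym _ _ _ dk sk hH).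
  rewrite /d /gk dotpDl -/q -/a; by field.
have bound : forall al, 0 <= al ->
    cubic_model N f0 g H sigma sk - cubic_model N f0 g H sigma (sk + al *: dk)
    >= al * (- d - sigma / 2 * a ^+ 2) - al ^+ 2 / 2 * (M + sigma * a)
       - sigma / 6%:R * al ^+ 3.
  move=> al al0; rewrite expand //.
  set t := N (sk + al *: dk).
  have t0 : 0 <= t by apply: (@N_ge0 _ _ _ hN).
  have ht : t <= a + al.
    by apply: le_trans (@ND _ _ _ hN _ _) _; rewrite (@NZ _ _ _ hN) hdk mulr1 ger0_norm.
  have ht3 : t ^+ 3 <= (a + al) ^+ 3 by apply: lerXn2r => //; rewrite nnegrE; lra.
  have hq2 : al ^+ 2 * q <= al ^+ 2 * M by apply: ler_wpM2l => //; apply: sqr_ge0.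
  have hs3 : sigma * t ^+ 3 <= sigma * (a + al) ^+ 3 by apply: ler_wpM2l => //; apply: ltW.
  lra.
rewrite hD.
rewrite -/gk -/a hD in hgap.
set G := - d - sigma / 2 * a ^+ 2.
have G0 : 0 <= G by rewrite /G; lra.
rewrite (ger0_norm G0).
set B := M + sigma * a.
have B0 : 0 <= B by rewrite /B; apply: addr_ge0 => //; apply: mulr_ge0 => //; apply: ltW.
have den0 : 0 < 1 + 3%:R / 2 * B by lra.
set a1 := G / (1 + 3%:R / 2 * B).
set a2 := Num.sqrt (G / sigma).
have a10 : 0 <= a1 by apply: divr_ge0 => //; apply: ltW.
have a20 : 0 <= a2 by apply: sqrtr_ge0.
set al := Num.min a1 a2.
have al0 : 0 <= al by rewrite le_min a10 a20.
have h1 : al * (1 + 3%:R / 2 * B) <= G.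
  have : al <= a1 by rewrite ge_min lexx.
  by rewrite /a1 ler_pdivlMr.
have h2 : sigma * al ^+ 2 <= G.
  have : al <= a2 by rewrite ge_min lexx orbT.
  move=> hal; have : al ^+ 2 <= a2 ^+ 2 by apply: lerXn2r.
  rewrite sqr_sqrtr; last by apply: divr_ge0 => //; apply: ltW.
  by rewrite ler_pdivlMr // mulrC.
have key : al * G / 2 <= cubic_model N f0 g H sigma sk
    - cubic_model N f0 g H sigma (sk + alphak *: dk).
  have hb := bound al al0; have hm := hamin al al0.
  have p1 : al * (al * (1 + 3%:R / 2 * B)) <= al * G by apply: ler_wpM2l.
  have p2 : al * (sigma * al ^+ 2) <= al * G by apply: ler_wpM2l.
  rewrite -/B -/G in hb; have p3 := sqr_ge0 al; nra.
apply: le_trans key.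
suff hmn : Num.min (G ^+ 2 / (1 + 3%:R / 2 * B))
    (G `^ (3%:R / 2) / (3%:R * Num.sqrt sigma)) <= al * G by lra.
rewrite /al; case: (leP a1 a2) => h.
  rewrite ge_min; apply/orP; left.
  by rewrite /a1 expr2 mulrAC.
rewrite ge_min; apply/orP; right.
have e32 : 3%:R / 2 = 1 + 2^-1 :> R by field.
have c32 : (1 + 2^-1 == 0 :> R) = false by apply/negbTE; rewrite gt_eqF //; lra.
rewrite e32 powRD; last by rewrite c32.
rewrite powRr1 // powR12_sqrt //.
have sq0 : 0 < Num.sqrt sigma by rewrite sqrtr_gt0.
have e : a2 * Num.sqrt sigma = Num.sqrt G.
  rewrite /a2 -sqrtrM; last by apply: divr_ge0 => //; apply: ltW.
  by rewrite divfK // gt_eqF.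
rewrite -e ler_pdivrMr; last by apply: mulr_gt0 => //; lra.
have p : 0 <= a2 * G by apply: mulr_ge0.
nra.
Qed.
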